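(* Let $k$ be a positive integer and $\mathbb{A}$ an alphabet with exactly $k$ letters. The number of extremal $XY_1XY_2X$-avoiding words over $\mathbb{A}$ is $\frac{(2k)!}{2^k}$.
   Context: A word is a finite sequence of letters. A factor of $W$ is a word $U$ with $W=W_1UW_2$ for some (possibly empty) words $W_1,W_2$. A word $W$ contains the pattern $XY_1XY_2X$ if some factor of $W$ can be written as $AB_1AB_2A$ with $A,B_1,B_2$ nonempty words (not necessarily distinct from one another); otherwise $W$ avoids $XY_1XY_2X$. An extension of a word $W$ over $\mathbb{A}$ is any word $W_1xW_2$ with $W=W_1W_2$ ($W_1,W_2$ possibly empty) and $x\in\mathbb{A}$. A word over $\mathbb{A}$ is extremal $XY_1XY_2X$-avoiding if it avoids $XY_1XY_2X$ and every extension of it contains $XY_1XY_2X$. *)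

(* Defs.v *)
From mathcomp Require Import all_boot.
Set Implicit Arguments. Unset Strict Implicit. Unset Printing Implicit Defensive.

Definition contains_XYXYX {A : Type} (W : seq A) : Prop :=
  exists (W1 W2 a b1 b2 : seq A),
    [/\ a <> [::], b1 <> [::], b2 <> [::] &
        W = W1 ++ (a ++ b1 ++ a ++ b2 ++ a) ++ W2].

Definition avoids_XYXYX {A : Type} (W : seq A) : Prop := ~ contains_XYXYX W.

Definition is_extension {A : Type} (W V : seq A) : Prop :=
  exists (W1 W2 : seq A) (x : A), W = W1 ++ W2 /\ V = W1 ++ x :: W2.

Definition extremal_XYXYX {A : Type} (W : seq A) : Prop :=
  avoids_XYXYX W /\ forall V : seq A, is_extension W V -> contains_XYXYX V.

(* Main.v *)
Require Import Defs.
From mathcomp Require Import all_boot.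
From mathcomp Require Import zify.
Set Implicit Arguments. Unset Strict Implicit. Unset Printing Implicit Defensive.


Fixpoint insn (T : Type) (a : T) (n : nat) (w : seq T) : seq (seq T) :=
  match n with
  | 0 => [:: w]
  | n'.+1 =>
    (fix go (w : seq T) : seq (seq T) :=
       map (cons a) (insn a n' w) ++
       match w with [::] => [::] | x :: w' => map (cons x) (go w') end) w
  end.

Lemma insnS (T : Type) (a : T) n w :
  insn a n.+1 w = map (cons a) (insn a n w) ++
    match w with [::] => [::] | x :: w' => map (cons x) (insn a n.+1 w') end.
Proof. by case: w. Qed.

Lemma size_insn (T : Type) (a : T) n w : size (insn a n w) = 'C(size w + n, n).
Proof.
elim: n w => [|n IHn] w; first by rewrite bin0.
elim: w => [|x w IHw]; rewrite insnS size_cat size_map IHn.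
  by rewrite /= add0n addn0 !binn.
rewrite size_map IHw /=. have -> : (size w).+1 + n.+1 = (size w + n.+1).+1 by lia. by rewrite [in RHS]binS addnC addSnnS.
Qed.

Lemma insn_uniq (T : eqType) (a : T) n w : a \notin w -> uniq (insn a n w).
Proof.
elim: n w => [|n IHn] w; first by [].
elim: w => [|x w IHw] Ha; rewrite insnS.
  by rewrite cats0 map_inj_uniq ?IHn //; move=> ? ? [].
rewrite in_cons negb_or in Ha; case/andP: Ha => Hax Ha.
rewrite cat_uniq map_inj_uniq ?IHn ?in_cons ?negb_or ?Hax ?Ha //=; last by move=> ? ? [].
rewrite map_inj_uniq ?IHw //; last by move=> ? ? [].
rewrite andbT; apply/hasPn => v /mapP [v' _ ->]; apply/mapP => [[v'' _ [E _]]].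
by move: Hax; rewrite E eqxx.
Qed.

Lemma insn_memE (T : eqType) (a : T) n w v : a \notin w -> v \in insn a n w ->
  count_mem a v = n /\ filter (predC1 a) v = w.
Proof.
elim: n w v => [|n IHn] w v.
  rewrite mem_seq1 => Ha /eqP ->; split; first by apply/count_memPn.
  apply/all_filterP/allP => y Hy /=; apply/eqP => E; by move: Ha; rewrite -E Hy.
elim: w v => [|x w IHw] v Ha; rewrite insnS mem_cat.
  rewrite orbF => /mapP [v' Hv' ->]; have [H1 H2] := IHn _ _ Ha Hv'.
  by rewrite /= eqxx H1 add1n.
have := Ha; rewrite in_cons negb_or; case/andP => Hax Ha'.
case/orP => /mapP [v' Hv' ->].
  have [H1 H2] := IHn _ _ Ha Hv'.
  by rewrite /= eqxx H1 add1n.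
have [H1 H2] := IHw _ Ha' Hv'.
rewrite /= H1 H2 eq_sym (negbTE Hax) /=; split => //.
Qed.

Lemma insn_memI (T : eqType) (a : T) v : forall n w,
  count_mem a v = n -> filter (predC1 a) v = w -> v \in insn a n w.
Proof.
elim: v => [|y v IHv] n w /=.
  by move=> <- <-; rewrite mem_seq1.
case: (eqVneq y a) => [->|Hya] /=.
  rewrite add1n => <- Hf; rewrite insnS mem_cat; apply/orP; left.
  by apply: map_f; apply: IHv.
rewrite add0n => Hc <-.
case: n Hc => [|n] Hc.
  rewrite mem_seq1; apply/eqP; congr (_ :: _).
  by apply/esym/all_filterP/allP => z Hz /=; apply/eqP => E; move/count_memPn: Hc; rewrite -E Hz.
rewrite insnS mem_cat; apply/orP; right; apply: map_f; exact: IHv.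
Qed.

Lemma size_filter_count (T : eqType) (a : T) v :
  size v = count_mem a v + size (filter (predC1 a) v).
Proof. by rewrite size_filter -(count_predC (pred1 a)) . Qed.

Fixpoint words (T : eqType) (L : seq T) : seq (seq T) :=
  match L with
  | [::] => [:: [::]]
  | a :: L' => flatten (map (insn a 2) (words L'))
  end.

Lemma words_cons (T : eqType) (a : T) L : words (a :: L) = flatten (map (insn a 2) (words L)).
Proof. by []. Qed.

Lemma words_mem (T : eqType) (L : seq T) v : uniq L ->
  v \in words L <-> (forall c, c \in L -> count_mem c v = 2) /\ all (mem L) v.
Proof.
elim: L v => [|a L IH] v.
  move=> _; rewrite /= mem_seq1; split.
    by move/eqP ->.
  case=> _; case: v => //= y v; by rewrite in_nil.
rewrite cons_uniq words_cons; case/andP => HaL HL; split.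
  case/flattenP => v' /mapP [w Hw ->] Hv.
  have [Hc Ha] := (IH w HL).1 Hw.
  have Haw : a \notin w.
    apply/negP => Haw; move/allP: Ha => /(_ _ Haw) /=; by rewrite (negbTE HaL).
  have [H1 H2] := insn_memE Haw Hv.
  split.
    move=> c; rewrite in_cons; case: (eqVneq c a) => [-> _|Hca] //= HcL.
    rewrite -(Hc _ HcL) -H2 count_filter; apply: eq_count => z /=.
    by case: (eqVneq z c) => // ->; rewrite Hca.
  apply/allP => z Hz; rewrite inE; case: (eqVneq z a) => [->|Hza]; first by rewrite mem_head.
  rewrite in_cons (negbTE Hza) /=.
  have : z \in filter (predC1 a) v by rewrite mem_filter /= Hza.
  by rewrite H2 => /(allP Ha).
case=> Hc Ha; apply/flattenP; exists (insn a 2 (filter (predC1 a) v)).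
  apply: map_f; apply/(IH _ HL); split.
    move=> c HcL; rewrite count_filter -(Hc c); last by rewrite in_cons HcL orbT.
    apply: eq_count => z /=; case: (eqVneq z c) => // ->.
    by case: (eqVneq c a) => // E; move: HaL; rewrite -E HcL.
  apply/allP => z; rewrite mem_filter => /andP [/= Hza Hz].
  by move/allP: Ha => /(_ _ Hz); rewrite !inE (negbTE Hza).
apply: insn_memI => //; apply: Hc; exact: mem_head.
Qed.

Lemma words_size_mem (T : eqType) (L : seq T) v : uniq L ->
  v \in words L -> size v = (size L).*2.
Proof.
move=> HL /(words_mem _ HL) [Hc Ha].
move: Hc Ha; elim: L HL v => [|a L IH] /= HL v Hc Ha.
  by case: v Hc Ha => //= y vv _; rewrite inE.
case/andP: HL => HaL HL.
rewrite (size_filter_count a) (IH HL); first by rewrite (Hc a (mem_head _ _)) doubleS.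
  move=> c HcL; rewrite count_filter -(Hc c); last by rewrite in_cons HcL orbT.
  apply: eq_count => z /=; case: (eqVneq z c) => // ->.
  by case: (eqVneq c a) => // E; move: HaL; rewrite -E HcL.
apply/allP => z; rewrite mem_filter => /andP [/= Hza Hz].
by move/allP: Ha => /(_ _ Hz); rewrite !inE (negbTE Hza).
Qed.

Lemma flatten_map_uniq (S T : eqType) (f : S -> seq T) (ws : seq S) :
  uniq ws -> (forall w, w \in ws -> uniq (f w)) ->
  (forall w1 w2 v, w1 \in ws -> w2 \in ws -> v \in f w1 -> v \in f w2 -> w1 = w2) ->
  uniq (flatten (map f ws)).
Proof.
elim: ws => [|w ws IH] //= /andP [Hw Hws] Hu Hd.
rewrite cat_uniq Hu ?mem_head // IH //; first last.
- by move=> w1 w2 v H1 H2; apply: Hd; rewrite in_cons ?H1 ?H2 orbT.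
- by move=> w' H; apply: Hu; rewrite in_cons H orbT.
rewrite andbT; apply/hasPn => v /flattenP [vs /mapP [w' Hw' ->] Hv] ; apply/negP => Hv'.
have E := Hd w w' v (mem_head _ _) _ Hv' Hv.
by move: Hw; rewrite E ?in_cons ?Hw' ?orbT // Hw'.
Qed.

Lemma words_uniq (T : eqType) (L : seq T) : uniq L -> uniq (words L).
Proof.
elim: L => [|a L IH] //; rewrite cons_uniq words_cons => /andP [HaL HL].
have Hna : forall w, w \in words L -> a \notin w.
  move=> w /(words_mem _ HL) [_ Ha]; apply/negP => Haw.
  by move/allP: Ha => /(_ _ Haw) /=; rewrite (negbTE HaL).
apply: flatten_map_uniq; first exact: IH.
  by move=> w Hw; apply: insn_uniq; apply: Hna.
move=> w1 w2 v H1 H2 Hv1 Hv2.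
by rewrite -(insn_memE (Hna _ H1) Hv1).2 (insn_memE (Hna _ H2) Hv2).2.
Qed.

Fixpoint gk (k : nat) : nat := if k is k'.+1 then gk k' * 'C(k'.*2.+2, 2) else 1.

Lemma sumn_const (T : eqType) (s : seq T) (f : T -> nat) C :
  (forall x, x \in s -> f x = C) -> sumn (map f s) = size s * C.
Proof.
elim: s => [|x s IH] //= H; rewrite H ?mem_head // IH //.
by move=> y Hy; apply: H; rewrite in_cons Hy orbT.
Qed.

Lemma words_size (T : eqType) (L : seq T) : uniq L -> size (words L) = gk (size L).
Proof.
elim: L => [|a L IH] //; rewrite cons_uniq words_cons => /andP [HaL HL].
rewrite size_flatten /shape -map_comp (@sumn_const _ _ _ 'C((size L).*2.+2, 2)) ?IH //.
move=> w Hw; rewrite /comp. rewrite size_insn (words_size_mem HL Hw).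
by rewrite addn2.
Qed.

Lemma gk_fact k : gk k * 2 ^ k = (k.*2)`!.
Proof.
elim: k => [|k IH] //=.
have H : 'C(k.*2.+2, 2) * 2 = (k.*2.+2) * (k.*2.+1).
  move: (bin_ffact (k.*2.+2) 2); rewrite !ffactnS ffactn0 muln1 => <-.
  by rewrite !factS fact0.
rewrite expnS doubleS !factS -IH !mulnA -H.
set X := gk k; set Y := binomial _ _; lia.
Qed.


Definition ins (T : Type) (g : nat) (x : T) (W : seq T) := take g W ++ x :: drop g W.

Definition vpos (T : eqType) (x0 : T) (W : seq T) :=
  exists i j l, [/\ i.+1 < j, j.+1 < l, l < size W,
                    nth x0 W j = nth x0 W i & nth x0 W l = nth x0 W i].

Lemma nth_cat_size (T : Type) (x0 : T) s t k : nth x0 (s ++ t) (size s + k) = nth x0 t k.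
Proof. by rewrite nth_cat ltnNge leq_addr /= addKn. Qed.

Lemma vpos_dec (T : eqType) (x0 : T) P c Q R S : Q <> [::] -> R <> [::] ->
  vpos x0 (P ++ c :: Q ++ c :: R ++ c :: S).
Proof.
move=> HQ HR.
have sQ : 0 < size Q by case: Q HQ.
have sR : 0 < size R by case: R HR.
exists (size P + 0), (size P + (size Q).+1), (size P + (size Q).+1 + (size R).+1).
rewrite -!addnA !nth_cat_size /= -[size Q]addn0 !nth_cat_size /= -[size R]addn0 -addnA !nth_cat_size /=.
split => //; try lia.
  repeat rewrite !size_cat /=; lia.
by rewrite nth_cat_size.
Qed.

Lemma dec_at (T : Type) (x0 : T) W i : i < size W -> W = take i W ++ nth x0 W i :: drop i.+1 W.
Proof. by move=> H; rewrite -(drop_nth x0 H) cat_take_drop. Qed.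

Lemma contains_vpos (T : eqType) (x0 : T) (W : seq T) : contains_XYXYX W <-> vpos x0 W.
Proof.
split.
  case=> W1 [W2 [a [b1 [b2 [Ha Hb1 Hb2 ->]]]]].
  case: a Ha => [//|c a'] _.
  have -> : W1 ++ ((c :: a') ++ b1 ++ (c :: a') ++ b2 ++ (c :: a')) ++ W2 =
            W1 ++ c :: (a' ++ b1) ++ c :: (a' ++ b2) ++ c :: (a' ++ W2).
    by rewrite /= -!catA /= -!catA.
  by apply: vpos_dec; [case: a' b1 Hb1 => [|? ?] [|? ?] | case: a' b2 Hb2 => [|? ?] [|? ?]].
case=> i [j [l [Hij Hjl Hl Hj Hll]]].
set c := nth x0 W i in Hj Hll.
have Hi : i < size W by lia.
set D1 := drop i.+1 W.
have sD1 : size D1 = size W - i.+1 by rewrite size_drop.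
have E1 : W = take i W ++ c :: D1 by apply: dec_at.
have Hj1 : j - i.+1 < size D1 by lia.
have E2 : D1 = take (j - i.+1) D1 ++ c :: drop (j - i.+1).+1 D1.
  have Hn : nth x0 D1 (j - i.+1) = c by rewrite nth_drop -Hj; congr nth; lia.
  by rewrite -{1}Hn; apply: dec_at.
set D2 := drop (j - i.+1).+1 D1.
have sD2 : size D2 = size W - j.+1 by rewrite size_drop; lia.
have Hl2 : l - j.+1 < size D2 by lia.
have E3 : D2 = take (l - j.+1) D2 ++ c :: drop (l - j.+1).+1 D2.
  have Hn : nth x0 D2 (l - j.+1) = c.
    by rewrite /D2 /D1 !nth_drop -Hll; congr nth; lia.
  by rewrite -{1}Hn; apply: dec_at.
exists (take i W), (drop (l - j.+1).+1 D2), [:: c], (take (j - i.+1) D1), (take (l - j.+1) D2).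
split => //.
- by move=> H; move: (size_takel (ltnW Hj1)); rewrite H /=; lia.
- by move=> H; move: (size_takel (ltnW Hl2)); rewrite H /=; lia.
rewrite /= -!catA /= -!catA /= -E3 -E2. exact: E1.
Qed.

Lemma ext_ins (T : Type) (W V : seq T) :
  is_extension W V <-> exists g x, g <= size W /\ V = ins g x W.
Proof.
split.
  case=> W1 [W2 [x [-> ->]]]; exists (size W1), x; split; first by rewrite size_cat leq_addr.
  by rewrite /ins take_size_cat // drop_size_cat.
case=> g [x [_ ->]]; exists (take g W), (drop g W), x; split => //.
by rewrite cat_take_drop.
Qed.

Lemma size_ins (T : Type) g (x : T) W : g <= size W -> size (ins g x W) = (size W).+1.
Proof. move=> H; rewrite /ins size_cat /= size_takel // size_drop; lia. Qed.

Lemma nth_ins_lt (T : Type) (x0 : T) g x W p : g <= size W -> p < g ->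
  nth x0 (ins g x W) p = nth x0 W p.
Proof.
move=> H Hp; rewrite /ins nth_cat size_takel //.
by rewrite Hp nth_take.
Qed.

Lemma nth_ins_eq (T : Type) (x0 : T) g x W : g <= size W -> nth x0 (ins g x W) g = x.
Proof.
move=> H; rewrite /ins nth_cat size_takel //.
by rewrite ltnn subnn.
Qed.

Lemma nth_ins_gt (T : Type) (x0 : T) g x W p : g <= size W -> g < p ->
  nth x0 (ins g x W) p = nth x0 W p.-1.
Proof.
move=> H Hp; rewrite /ins nth_cat size_takel //.
rewrite ltnNge ltnW //= (_ : p - g = (p.-1 - g).+1) /=; last by lia.
rewrite nth_drop; congr nth; lia.
Qed.


Fixpoint dbl (T : Type) (u : seq T) : seq T :=
  if u is x :: u' then x :: x :: dbl u' else [::].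

Lemma size_dbl (T : Type) (u : seq T) : size (dbl u) = 2 * size u.
Proof. elim: u => //= x u ->; lia. Qed.

Lemma nth_dbl (T : Type) (x0 : T) (u : seq T) p : nth x0 (dbl u) p = nth x0 u (p %/ 2).
Proof.
elim: u p => [|x u IH] p /=; first by rewrite !nth_nil.
case: p => [|[|p]] //=.
rewrite IH (_ : p.+2 %/ 2 = (p %/ 2).+1) //; lia.
Qed.

Lemma count_dbl (T : eqType) (c : T) u : count_mem c (dbl u) = 2 * count_mem c u.
Proof. elim: u => //= x u ->; lia. Qed.

Lemma dbl_inj (T : Type) : injective (@dbl T).
Proof. elim=> [|x u IH] [|y v] //= [-> _ E]; by rewrite (IH _ E). Qed.

Lemma count0_nth (T : eqType) (x0 c : T) u : count_mem c u = 0 ->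
  forall h, h < size u -> (nth x0 u h == c) = false.
Proof.
move/count_memPn => Hc h Hh; apply/negP => /eqP E.
by move: Hc; rewrite -E mem_nth.
Qed.

Lemma count1_pos (T : eqType) (x0 c : T) u : count_mem c u = 1 ->
  exists h1, h1 < size u /\ forall h, h < size u -> (nth x0 u h == c) = (h == h1).
Proof.
elim: u => [|y u IH] //=.
case: (eqVneq y c) => [->|Hyc] /=.
  rewrite add1n => [[H0]]; exists 0; split => // [[|h]] //= Hh.
  by rewrite eqxx. by rewrite count0_nth.
rewrite add0n => /IH [h1 [Hh1 H]]; exists h1.+1; split => // [[|h]] //= Hh.
by rewrite (negbTE Hyc). by rewrite H.
Qed.

Lemma count2_pos (T : eqType) (x0 c : T) u : count_mem c u = 2 ->
  exists h1 h2, [/\ h1 < h2, h2 < size u &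
     forall h, h < size u -> (nth x0 u h == c) = (h == h1) || (h == h2)].
Proof.
elim: u => [|y u IH] //=.
case: (eqVneq y c) => [->|Hyc] /=.
  rewrite add1n => [[/(count1_pos x0) [h2 [Hh2 H]]]]; exists 0, h2.+1; split => // [[|h]] //= Hh.
  by rewrite eqxx. by rewrite H.
rewrite add0n => /IH [h1 [h2 [H12 Hh2 H]]]; exists h1.+1, h2.+1; split => // [[|h]] //= Hh.
by rewrite (negbTE Hyc). by rewrite H.
Qed.

Lemma pos_count0 (T : eqType) (x0 c : T) u :
  (forall h, h < size u -> (nth x0 u h == c) = false) -> count_mem c u = 0.
Proof.
move=> H; apply/count_memPn/negP => /(nthP x0) [h Hh /eqP E].
by rewrite H in E.
Qed.

Lemma pos_count1 (T : eqType) (x0 c : T) u h1 : h1 < size u ->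
  (forall h, h < size u -> (nth x0 u h == c) = (h == h1)) -> count_mem c u = 1.
Proof.
elim: u h1 => [|y u IH] h1 //= Hh1 H.
case: h1 Hh1 H => [|h1] Hh1 H.
  have := H 0 isT; rewrite /= => ->; rewrite add1n (@pos_count0 _ x0) //.
  by move=> h Hh; have := H h.+1 Hh.
have := H 0 isT; rewrite /= => ->; rewrite add0n (IH h1) //.
by move=> h Hh; have := H h.+1 Hh.
Qed.

Lemma pos_count2 (T : eqType) (x0 c : T) u h1 h2 : h1 < h2 -> h2 < size u ->
  (forall h, h < size u -> (nth x0 u h == c) = (h == h1) || (h == h2)) -> count_mem c u = 2.
Proof.
elim: u h1 h2 => [|y u IH] h1 h2 //= H12 Hh2 H.
case: h1 H12 H => [|h1] H12 H.
  have := H 0 isT; rewrite /= => ->; rewrite add1n (@pos_count1 _ x0 _ _ h2.-1) //; first lia.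
  move=> h Hh; have := H h.+1 Hh; rewrite /= => ->; apply/eqP/eqP; lia.
have Hy : (y == c) = false by rewrite (H 0 isT) /=; apply/eqP; lia.
rewrite Hy add0n (IH h1 h2.-1) //; try lia.
move=> h Hh; have := H h.+1 Hh; rewrite /= => ->.
by congr orb; apply/eqP/eqP; lia.
Qed.

Lemma other_letter (T : eqType) (x0 : T) g x W i j l :
  g <= size W -> i.+1 < j -> j.+1 < l -> l < (size W).+1 ->
  nth x0 (ins g x W) j = nth x0 (ins g x W) i ->
  nth x0 (ins g x W) l = nth x0 (ins g x W) i ->
  nth x0 (ins g x W) i != x ->
  vpos x0 W \/ [/\ 0 < g, g < size W, nth x0 W g.-1 = nth x0 (ins g x W) i &
                   nth x0 W g = nth x0 (ins g x W) i].
Proof.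
move=> Hg Hij Hjl Hl Hj Hll Hx.
set d := nth x0 (ins g x W) i in Hj Hll Hx *.
have Hne : forall p, p < (size W).+1 -> nth x0 (ins g x W) p = d ->
   exists p', [/\ (p < g /\ p' = p) \/ (g < p /\ p' = p.-1), p' < size W & nth x0 W p' = d].
  move=> p Hp Hpd; case: (ltngtP p g) => Hpg.
  - exists p; split; [by left | lia | by rewrite -(nth_ins_lt x0 x Hg Hpg)].
  - exists p.-1; split; [by right | lia | by rewrite -(nth_ins_gt x0 x Hg Hpg)].
  - by move: Hx; rewrite -Hpd Hpg nth_ins_eq // eqxx.
have [i' [Hi' Hi's Hid]] := Hne i (ltac:(lia)) erefl.
have [j' [Hj' Hj's Hjd]] := Hne j (ltac:(lia)) Hj.
have [l' [Hl' Hl's Hld]] := Hne l Hl Hll.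
case: (boolP ((i'.+1 < j') && (j'.+1 < l'))) => [/andP [H1 H2]|H].
  by left; exists i', j', l'; split => //; rewrite ?Hjd ?Hld Hid.
right.
have : (i = g.-1 /\ j = g.+1) \/ (j = g.-1 /\ l = g.+1).
  move: H; rewrite negb_and -!leqNgt; lia.
case=> [[Ei Ej]|[Ej El]].
  have Ei' : i' = g.-1 by lia.
  have Ej' : j' = g by lia.
  split; [lia | lia | by rewrite -Ei' | by rewrite -Ej'].
have Ej' : j' = g.-1 by lia.
have El' : l' = g by lia.
split; [lia | lia | by rewrite -Ej' | by rewrite -El'].
Qed.


Lemma fwd_avoid (T : eqType) (x0 : T) u :
  (forall c, count_mem c u = 2) -> ~ vpos x0 (dbl u).
Proof.
move=> Hu [i [j [l [Hij Hjl Hl Hj Hll]]]].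
rewrite size_dbl in Hl; rewrite !nth_dbl in Hj Hll.
set c := nth x0 u (i %/ 2) in Hj Hll.
have [h1 [h2 [H12 Hh2 H]]] := count2_pos x0 (Hu c).
have Pi : (i %/ 2 == h1) || (i %/ 2 == h2) by rewrite -H ?eqxx //; lia.
have Pj : (j %/ 2 == h1) || (j %/ 2 == h2) by rewrite -H ?Hj ?eqxx //; lia.
have Pl : (l %/ 2 == h1) || (l %/ 2 == h2) by rewrite -H ?Hll ?eqxx //; lia.
move: Pi Pj Pl => /orP [] /eqP Pi /orP [] /eqP Pj /orP [] /eqP Pl; lia.
Qed.

Lemma nth_dbl_at (T : Type) (x0 : T) u p h : p %/ 2 = h -> nth x0 (dbl u) p = nth x0 u h.
Proof. by move=> <-; rewrite nth_dbl. Qed.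

Lemma dbl_pair (T : Type) (x0 c : T) u h : nth x0 u h = c ->
  nth x0 (dbl u) (2 * h) = c /\ nth x0 (dbl u) (2 * h).+1 = c.
Proof. by move=> H; rewrite !(nth_dbl_at _ _ (_ : _ = h)) //; lia. Qed.

Lemma fwd_ext (T : eqType) (x0 : T) u g x :
  (forall c, count_mem c u = 2) -> g <= size (dbl u) -> vpos x0 (ins g x (dbl u)).
Proof.
move=> Hu Hg.
have sV : size (ins g x (dbl u)) = (2 * size u).+1 by rewrite size_ins // size_dbl.
move: (Hg); rewrite size_dbl => Hg'.
case: (boolP (g %% 2 == 0)) => [/eqP Hev | Hodd].
  have [h1 [h2 [H12 Hh2 H]]] := count2_pos x0 (Hu x).
  have Ux1 : nth x0 u h1 = x by apply/eqP; rewrite H ?eqxx //; lia.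
  have Ux2 : nth x0 u h2 = x by apply/eqP; rewrite H ?eqxx ?orbT //; lia.
  have [A1 B1] := dbl_pair Ux1.
  have [A2 B2] := dbl_pair Ux2.
  case: (leqP g (2 * h1)) => Hg1.
    exists g, (2 * h1).+2, (2 * h2).+2; rewrite sV.
    have p1 : g < (2 * h1).+2 by lia. have p2 : g < (2 * h2).+2 by lia.
    rewrite nth_ins_eq // (nth_ins_gt _ _ Hg p1) (nth_ins_gt _ _ Hg p2) /= B1 B2; split => //; lia.
  case: (leqP g (2 * h2)) => Hg2.
    exists (2 * h1), g, (2 * h2).+2; rewrite sV.
    have p1 : 2 * h1 < g by lia. have p2 : g < (2 * h2).+2 by lia.
    rewrite nth_ins_eq // (nth_ins_lt _ _ Hg p1) (nth_ins_gt _ _ Hg p2) /= A1 B2; split => //; lia.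
  exists (2 * h1), (2 * h2), g; rewrite sV.
  have p1 : 2 * h1 < g by lia. have p2 : 2 * h2 < g by lia.
  rewrite nth_ins_eq // (nth_ins_lt _ _ Hg p1) (nth_ins_lt _ _ Hg p2) /= A1 A2; split => //; lia.
set h := g %/ 2.
have Eg : g = (2 * h).+1 by rewrite /h; move: Hodd; lia.
set c := nth x0 u h.
have [h1 [h2 [H12 Hh2 H]]] := count2_pos x0 (Hu c).
have Hh : h < size u by lia.
have Ux1 : nth x0 u h1 = c by apply/eqP; rewrite H ?eqxx //; lia.
have Ux2 : nth x0 u h2 = c by apply/eqP; rewrite H ?eqxx ?orbT //; lia.
have [A1 B1] := dbl_pair Ux1.
have [A2 B2] := dbl_pair Ux2.
have [A B] := dbl_pair (erefl c : nth x0 u h = c).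
have : (h == h1) || (h == h2) by rewrite -H // eqxx.
case/orP => /eqP Eh.
  exists (2 * h), (2 * h).+2, (2 * h2).+2; rewrite sV.
  have p0 : 2 * h < g by lia. have p1 : g < (2 * h).+2 by lia. have p2 : g < (2 * h2).+2 by lia.
  rewrite (nth_ins_lt _ _ Hg p0) (nth_ins_gt _ _ Hg p1) (nth_ins_gt _ _ Hg p2) /= A B B2; split => //; lia.
exists (2 * h1), (2 * h), (2 * h).+2; rewrite sV.
have p0 : 2 * h1 < g by lia. have p1 : 2 * h < g by lia. have p2 : g < (2 * h).+2 by lia.
rewrite (nth_ins_lt _ _ Hg p0) (nth_ins_lt _ _ Hg p1) (nth_ins_gt _ _ Hg p2) /= A B A1; split => //; lia.
Qed.


Lemma posV (T : eqType) (x0 : T) g x W p : g <= size W -> p < (size W).+1 ->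
  [\/ p < g /\ nth x0 (ins g x W) p = nth x0 W p, p = g /\ nth x0 (ins g x W) p = x |
      g < p /\ nth x0 (ins g x W) p = nth x0 W p.-1].
Proof.
move=> Hg Hp; case: (ltngtP p g) => H.
- by apply: Or31; rewrite nth_ins_lt.
- by apply: Or33; rewrite nth_ins_gt.
- by apply: Or32; rewrite H nth_ins_eq.
Qed.

Lemma ins_c (T : eqType) (x0 : T) g c W : ~ vpos x0 W -> g <= size W ->
  vpos x0 (ins g c W) ->
  (0 < g /\ nth x0 W g.-1 = c) \/ (g < size W /\ nth x0 W g = c) ->
  exists i j l, [/\ i.+1 < j, j.+1 < l, l < (size W).+1 &
    [/\ nth x0 (ins g c W) i = c, nth x0 (ins g c W) j = c & nth x0 (ins g c W) l = c]].
Proof.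
move=> Hav Hg [i [j [l [Hij Hjl Hl Hj Hll]]]] Hadj.
rewrite size_ins // in Hl.
case: (eqVneq (nth x0 (ins g c W) i) c) => Hd.
  by exists i, j, l; split => //; rewrite ?Hj ?Hll.
have [//|[H1 H2 H3 H4]] := other_letter Hg Hij Hjl Hl Hj Hll Hd.
by case: Hadj => [[_ E]|[_ E]]; move: Hd; [rewrite -H3 E eqxx | rewrite -H4 E eqxx].
Qed.

Lemma rev_letter (T : eqType) (x0 : T) W c :
  ~ vpos x0 W -> (forall g x, g <= size W -> vpos x0 (ins g x W)) ->
  exists m M, [/\ m.+2 < M, M < size W, nth x0 W m = c /\ nth x0 W m.+1 = c,
     nth x0 W M.-1 = c /\ nth x0 W M = c &
     forall p, p < size W -> nth x0 W p = c -> [\/ p = m, p = m.+1, p = M.-1 | p = M]].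
Proof.
move=> Hav Hext.
set n := size W.
have Hocc : c \in W.
  case: (boolP (c \in W)) => // Hn; exfalso.
  have Hg : n <= size W by [].
  have [i [j [l [Hij Hjl Hl Hj Hll]]]] := Hext n c Hg.
  rewrite size_ins // in Hl.
  have Hnot : forall p, p < n -> nth x0 W p = c -> False.
    by move=> p Hp E; move: Hn; rewrite -E mem_nth.
  case: (eqVneq (nth x0 (ins n c W) i) c) => Hd.
    have Hjn : j < n by lia.
    by apply: (Hnot j Hjn); rewrite -(nth_ins_lt x0 c Hg Hjn) Hj.
  have [//|[H1 H2 H3 H4]] := other_letter Hg Hij Hjl Hl Hj Hll Hd.
  by move: H2; rewrite ltnn.
set P := fun p => (p < n) && (nth x0 W p == c).
have exP : exists p, P p by exists (index c W); rewrite /P index_mem Hocc nth_index ?eqxx.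
have ubP : forall p, P p -> p <= n by move=> p /andP [H _]; exact: ltnW.
case: (ex_minnP exP) => m /andP [Hmn /eqP Hmc] Hmin'.
case: (ex_maxnP exP ubP) => M /andP [HMn /eqP HMc] Hmax'.
have Hmin : forall p, p < n -> nth x0 W p = c -> m <= p.
  by move=> p Hp E; apply: Hmin'; rewrite /P Hp E eqxx.
have Hmax : forall p, p < n -> nth x0 W p = c -> p <= M.
  by move=> p Hp E; apply: Hmax'; rewrite /P Hp E eqxx.
have Hmid : forall p, p < n -> nth x0 W p = c -> m.+1 < p -> p.+1 < M -> False.
  by move=> p Hp E H1 H2; apply: Hav; exists m, p, M; split => //; rewrite ?E ?HMc.
have Wm1 : m.+1 < n /\ nth x0 W m.+1 = c.
  case: (boolP ((m.+1 < n) && (nth x0 W m.+1 == c))) => [/andP [? /eqP ?] //| Hneg].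
  exfalso.
  have Hg : m.+1 <= size W by [].
  have [i [j [l [Hij Hjl Hl [Hi Hj Hll]]]]] :=
    ins_c Hav Hg (Hext _ c Hg) (or_introl (conj (ltn0Sn m) Hmc)).
  have Q : forall p, p < n.+1 -> nth x0 (ins m.+1 c W) p = c ->
           p = m \/ p = m.+1 \/ (M <= p /\ p <= M.+1).
    move=> p Hp; case: (posV x0 c Hg Hp) => [[H ->]|[H _]|[H ->]] E.
    - have := Hmin p ltac:(lia) E; lia.
    - by right; left.
    - have Hp' : p.-1 < n by lia.
      have := Hmin _ Hp' E; have := Hmax _ Hp' E => h1 h2.
      case: (eqVneq p.-1 m.+1) => Ep.
        by move: Hneg; rewrite -Ep Hp' E eqxx.
      case: (ltnP p.-1.+1 M) => h3.
        by exfalso; apply: (Hmid _ Hp' E) => //; lia.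
      lia.
  have := Q i ltac:(lia) Hi; have := Q j ltac:(lia) Hj; have := Q l Hl Hll; lia.
case: Wm1 => Hm1n Hm1c.
have HmM : m.+1 <= M by apply: Hmax.
have WM1 : nth x0 W M.-1 = c.
  case: (eqVneq (nth x0 W M.-1) c) => // Hneg; exfalso.
  have Hg : M <= size W by apply: ltnW.
  have [i [j [l [Hij Hjl Hl [Hi Hj Hll]]]]] :=
    ins_c Hav Hg (Hext _ c Hg) (or_intror (conj HMn HMc)).
  have Q : forall p, p < n.+1 -> nth x0 (ins M c W) p = c ->
           (m <= p /\ p <= m.+1) \/ (M <= p /\ p <= M.+1).
    move=> p Hp; case: (posV x0 c Hg Hp) => [[H ->]|[H _]|[H ->]] E.
    - have Hp' : p < n by lia.
      have := Hmin _ Hp' E => h1.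
      case: (eqVneq p M.-1) => Ep; first by move: Hneg; rewrite -Ep E eqxx.
      case: (ltnP m.+1 p) => h3; last lia.
      by exfalso; apply: (Hmid _ Hp' E) => //; lia.
    - lia.
    - have Hp' : p.-1 < n by lia.
      have := Hmax _ Hp' E; lia.
  have := Q i ltac:(lia) Hi; have := Q j ltac:(lia) Hj; have := Q l Hl Hll; lia.
have HM3 : m.+2 < M.
  case: (ltnP m.+2 M) => // Hle; exfalso.
  have Hg : M.+1 <= size W by [].
  have [i [j [l [Hij Hjl Hl [Hi Hj Hll]]]]] :=
    ins_c Hav Hg (Hext _ c Hg) (or_introl (conj (ltn0Sn M) HMc)).
  have Q : forall p, p < n.+1 -> nth x0 (ins M.+1 c W) p = c -> m <= p /\ p <= M.+1.
    move=> p Hp; case: (posV x0 c Hg Hp) => [[H ->]|[H _]|[H ->]] E.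
    - have := Hmin p ltac:(lia) E; lia.
    - lia.
    - have Hp' : p.-1 < n by lia.
      have := Hmax _ Hp' E; lia.
  have := Q i ltac:(lia) Hi; have := Q j ltac:(lia) Hj; have := Q l Hl Hll; lia.
exists m, M; split => //.
move=> p Hp E.
have := Hmin _ Hp E; have := Hmax _ Hp E => h1 h2.
case: (ltnP m.+1 p) => h3; last by (have : p = m \/ p = m.+1 by lia); case=> ->; [apply: Or41|apply: Or42].
case: (ltnP p.+1 M) => h4; first by exfalso; apply: (Hmid _ Hp E).
have : p = M.-1 \/ p = M by lia.
by case=> ->; [apply: Or43|apply: Or44].
Qed.


Lemma rev_global (T : eqType) (x0 : T) W :
  ~ vpos x0 W -> (forall g x, g <= size W -> vpos x0 (ins g x W)) ->
  exists u, W = dbl u /\ forall c, count_mem c u = 2.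
Proof.
move=> Hav Hext.
have L := fun c => rev_letter c Hav Hext.
set n := size W.
have Align : forall p, p %% 2 = 0 -> p < n -> p.+1 < n /\ nth x0 W p.+1 = nth x0 W p.
  elim/ltn_ind => p IH Hev Hp.
  set c := nth x0 W p.
  have [m [M [H3 HMn [Hm Hm1] [HM1 HM] Hsub]]] := L c.
  case: (Hsub p Hp erefl) => Ep.
  - by split; [lia | rewrite Ep Hm1].
  - exfalso.
    have [_ E] := IH (p - 2) ltac:(lia) ltac:(lia) ltac:(lia).
    have E' : nth x0 W (p - 2) = c by rewrite -E (_ : (p - 2).+1 = m) ?Hm //; lia.
    by case: (Hsub (p - 2) ltac:(lia) E'); lia.
  - by split; [lia | rewrite (_ : p.+1 = M) ?HM //; lia].
  - exfalso.
    have [_ E] := IH (p - 2) ltac:(lia) ltac:(lia) ltac:(lia).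
    have E' : nth x0 W (p - 2) = c by rewrite -E (_ : (p - 2).+1 = M.-1) ?HM1 //; lia.
    have EM : M = m.+3 by case: (Hsub (p - 2) ltac:(lia) E'); lia.
    have [_ E2] := IH (p - 4) ltac:(lia) ltac:(lia) ltac:(lia).
    have E2' : nth x0 W (p - 4) = c by rewrite -E2 (_ : (p - 4).+1 = m) ?Hm //; lia.
    by case: (Hsub (p - 4) ltac:(lia) E2'); lia.
have Hn : n %% 2 = 0.
  case: (boolP (n %% 2 == 0)) => [/eqP //|Hodd].
  have := Align n.-1 ltac:(lia) ltac:(lia); lia.
set u := mkseq (fun h => nth x0 W (2 * h)) (n %/ 2).
have Hu : W = dbl u.
  apply: (@eq_from_nth _ x0); first by rewrite size_dbl size_mkseq; lia.
  move=> p Hp; rewrite nth_dbl nth_mkseq; last by lia.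
  case: (boolP (p %% 2 == 0)) => [/eqP Hev|Hodd].
    by congr nth; lia.
  have [_ E] := Align p.-1 ltac:(lia) ltac:(lia).
  by rewrite (_ : 2 * (p %/ 2) = p.-1) -?E; [congr nth; lia | lia].
exists u; split => // c.
have [m [M [H3 HMn [Hm Hm1] [HM1 HM] Hsub]]] := L c.
have Hmev : m %% 2 = 0.
  case: (boolP (m %% 2 == 0)) => [/eqP //|Hodd]; exfalso.
  have [_ E] := Align m.-1 ltac:(lia) ltac:(lia).
  have E' : nth x0 W m.-1 = c by rewrite -E (_ : m.-1.+1 = m) ?Hm //; lia.
  by case: (Hsub m.-1 ltac:(lia) E'); lia.
have HMev : M.-1 %% 2 = 0.
  case: (boolP (M.-1 %% 2 == 0)) => [/eqP //|Hodd]; exfalso.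
  have [HM1n E] := Align M ltac:(lia) HMn.
  have E' : nth x0 W M.+1 = c by rewrite E HM.
  by case: (Hsub _ HM1n E'); lia.
apply: (@pos_count2 _ x0 _ _ (m %/ 2) (M.-1 %/ 2)); first lia.
  rewrite size_mkseq; lia.
move=> h; rewrite size_mkseq => Hh; rewrite nth_mkseq //.
apply/idP/idP => [/eqP E | /orP [/eqP Eh | /eqP Eh]].
- by case: (Hsub (2 * h) ltac:(lia) E) => Ep; apply/orP; [left|left|right|right]; apply/eqP; lia.
- by rewrite (_ : 2 * h = m) ?Hm //; lia.
- by rewrite (_ : 2 * h = M.-1) ?HM1 //; lia.
Qed.


Lemma extremal_iff (T : eqType) (x0 : T) W :
  extremal_XYXYX W <-> ~ vpos x0 W /\ (forall g x, g <= size W -> vpos x0 (ins g x W)).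
Proof.
rewrite /extremal_XYXYX /avoids_XYXYX; split.
  case=> Hav Hext; split.
    by move=> H; apply: Hav; apply/(contains_vpos x0).
  move=> g x Hg; apply/(contains_vpos x0); apply: Hext; apply/ext_ins; by exists g, x.
case=> Hav Hext; split.
  by move=> H; apply: Hav; apply/(contains_vpos x0).
move=> V /ext_ins [g [x [Hg ->]]]; apply/(contains_vpos x0); exact: Hext.
Qed.

Unset Implicit Arguments.

Theorem mainTheorem4 (k : nat) (A : finType) :
  0 < k -> #|A| = k ->
  exists s : seq (seq A),
    [/\ uniq s,
        (forall W : seq A, W \in s <-> extremal_XYXYX W) &
        size s = (k.*2)`! %/ 2 ^ k].
Proof.
move=> Hk HA.
have Hs : 0 < size (enum A) by rewrite -cardE HA.
have x0 : A by move: Hs; case: (enum A) => [//|x _ _]; exact: x.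
exists (map (@dbl A) (words (enum A))); split.
- rewrite map_inj_uniq; [exact: words_uniq (enum_uniq A) | exact: (@dbl_inj A)].
- move=> W; rewrite (extremal_iff x0); split.
    case/mapP => u /(words_mem _ (enum_uniq A)) [Hc _] ->.
    have Hc' : forall c, count_mem c u = 2 by move=> c; apply: Hc; rewrite mem_enum.
    split; first exact: fwd_avoid.
    by move=> g x Hg; apply: fwd_ext.
  case=> Hav Hext; have [u [-> Hc]] := rev_global Hav Hext.
  apply: map_f; apply/(words_mem _ (enum_uniq A)); split.
    by move=> c _; apply: Hc.
  by apply/allP => y _; rewrite inE mem_enum.
- by rewrite size_map words_size ?enum_uniq // -cardE HA -gk_fact mulnK // expn_gt0.
Qed.
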